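(* Let $q$ be a prime power, $h\geq 2$, and let $\mathcal{L}$ be a blocking set of $\mathrm{PG}(2,q^h)$ projectively equivalent to $\{(x:\mathrm{Tr}_{q^h/q}(x):y): x\in\mathbb{F}_{q^h},\ y\in\mathbb{F}_q,\ (x,y)\neq(0,0)\}$. Let $P$ be a point not in $\mathcal{L}$. Then $P$ is incident with at least $q^h-q^{h-2}+1$ tangent lines to $\mathcal{L}$.
   Context: $\mathrm{Tr}_{q^h/q}(x)=x+x^q+\dots+x^{q^{h-1}}$. Points of $\mathrm{PG}(2,q^h)$ are written in homogeneous coordinates. A tangent line to $\mathcal{L}$ is a line meeting $\mathcal{L}$ in exactly one point. *)

(* Defs.v *)
From HB Require Import structures.
From mathcomp Require Import all_boot all_order all_algebra all_field.
Set Implicit Arguments. Unset Strict Implicit. Unset Printing Implicit Defensive.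
Import GRing.Theory.
Local Open Scope ring_scope.

Definition prime_power (q : nat) : Prop :=
  exists p k : nat, [/\ prime p, (0 < k)%N & q = (p ^ k)%N].

Section PG2.
Variable F : finFieldType.

Definition Tr (q h : nat) (x : F) : F := \sum_(i < h) x ^+ (q ^ i).

Definition row3 (a b c : F) : 'rV[F]_3 := \row_(i < 3) [:: a; b; c]`_i.

(* Canonical representative of a point (or line) of PG(2,F):
   a nonzero vector whose first nonzero coordinate is 1. *)
Definition normalized (v : 'rV[F]_3) : bool :=
  [exists i : 'I_3, (v 0 i == 1) && [forall j : 'I_3, (j < i)%N ==> (v 0 j == 0)]].

Definition incident (u l : 'rV[F]_3) : bool := \sum_(i < 3) u 0 i * l 0 i == 0.

Definition inL0 (q h : nat) (v : 'rV[F]_3) : bool :=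
  [exists x : F, exists y : F,
     [&& y ^+ q == y, (x != 0) || (y != 0) &
         [exists c : F, (c != 0) && (v == c *: row3 x (Tr q h x) y)]]].

Definition blocking_set (S : pred 'rV[F]_3) : Prop :=
  forall l : 'rV[F]_3, normalized l ->
    exists u : 'rV[F]_3, [&& normalized u, S u & incident u l].

Definition tangent (S : pred 'rV[F]_3) (l : 'rV[F]_3) : bool :=
  #|[set u : 'rV[F]_3 | [&& normalized u, S u & incident u l]]| == 1%N.

End PG2.

(* Main.v *)
From HB Require Import structures.
From mathcomp Require Import all_boot all_order all_algebra all_field.
From mathcomp Require Import ring zify.
Require Import Defs.
Set Implicit Arguments. Unset Strict Implicit. Unset Printing Implicit Defensive.
Import GRing.Theory.
Local Open Scope ring_scope.

Lemma inj_le (T T' : finType) (f : T -> T') (A : {set T}) (B : {set T'}) :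
  {in A &, injective f} -> (forall x, x \in A -> f x \in B) -> (#|A| <= #|B|)%N.
Proof.
move=> inj hAB; rewrite -(card_in_imset inj); apply: subset_leq_card.
by apply/subsetP => y /imsetP [x hx ->]; apply: hAB.
Qed.


Ltac fld := field; repeat (apply/andP; split); try done.

Section FieldFacts.
Variables (F : finFieldType) (q h p k : nat).
Hypotheses (hp : prime p) (hk : (0 < k)%N) (hqpk : q = (p ^ k)%N)
  (hh : (2 <= h)%N) (hF : #|F| = (q ^ h)%N).

Local Notation Tr := (@Tr F q h).
Definition Qf (t : F) : bool := t ^+ q == t.

Lemma q_gt1 : (1 < q)%N.
Proof. by rewrite hqpk -{1}(expn0 p) ltn_exp2l ?prime_gt1. Qed.

Lemma charF : p \in [char F].
Proof. apply: (@card_finPcharP F p (k * h)) => //; by rewrite hF hqpk expnM. Qed.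

Lemma frobD (i : nat) (x y : F) : (x + y) ^+ (q ^ i) = x ^+ (q ^ i) + y ^+ (q ^ i).
Proof.
apply: exprDn_pchar; rewrite hqpk -expnM pnatX (pnatE _ hp) charF //.
Qed.

Lemma frob0 (i : nat) : (0 : F) ^+ (q ^ i) = 0.
Proof. by rewrite expr0n expn_eq0 (negbTE (lt0n_neq0 (ltnW q_gt1))). Qed.

Lemma frobN (i : nat) (x : F) : (- x) ^+ (q ^ i) = - x ^+ (q ^ i).
Proof.
apply/eqP; rewrite -subr_eq0 opprK addrC -frobD subrr frob0 //.
Qed.

Lemma fcard (x : F) : x ^+ (q ^ h) = x.
Proof. by rewrite -hF expf_card. Qed.

Lemma TrD (x y : F) : Tr (x + y) = Tr x + Tr y.
Proof. by rewrite /Defs.Tr -big_split; apply: eq_bigr => i _; rewrite frobD. Qed.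

Lemma TrN (x : F) : Tr (- x) = - Tr x.
Proof. by rewrite /Defs.Tr -sumrN; apply: eq_bigr => i _; rewrite frobN. Qed.

Lemma TrB (x y : F) : Tr (x - y) = Tr x - Tr y.
Proof. by rewrite TrD TrN. Qed.

Lemma Tr0 : Tr 0 = 0.
Proof. by rewrite /Defs.Tr big1 // => i _; rewrite frob0. Qed.

Lemma QfX (c : F) i : Qf c -> c ^+ (q ^ i) = c.
Proof.
move/eqP=> hc; elim: i => [|i IH]; first by rewrite expn0 expr1.
by rewrite expnSr exprM IH hc.
Qed.

Lemma TrZ (c x : F) : Qf c -> Tr (c * x) = c * Tr x.
Proof.
move=> hc; rewrite /Defs.Tr mulr_sumr; apply: eq_bigr => i _.
rewrite exprMn (QfX i hc) //.
Qed.

Lemma frob_sum (i : nat) (s : seq nat) (f : nat -> F) :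
  (\sum_(j <- s) f j) ^+ (q ^ i) = \sum_(j <- s) (f j) ^+ (q ^ i).
Proof.
elim: s => [|a s IH]; first by rewrite !big_nil frob0.
by rewrite !big_cons frobD IH.
Qed.

Lemma TrQ (x : F) : Qf (Tr x).
Proof.
apply/eqP; rewrite /Defs.Tr -(big_mkord xpredT (fun i => x ^+ (q ^ i))).
rewrite -(expn1 q) frob_sum expn1.
have -> : \sum_(j <- index_iota 0 h) (x ^+ (q ^ j)) ^+ q
        = \sum_(0 <= j < h) x ^+ (q ^ j.+1).
  by apply: eq_bigr => j _; rewrite -exprM expnSr.
have [h' eh] : exists h', h = h'.+1 by exists h.-1; rewrite prednK // ltnW.
have fc := fcard x; rewrite eh in fc *.
rewrite big_nat_recr //= big_nat_recl //= fc expn0 expr1 addrC.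
by [].
Qed.

Lemma Qf0 : Qf 0. Proof. by rewrite /Qf expr0n; case: q q_gt1. Qed.
Lemma Qf1 : Qf 1. Proof. by rewrite /Qf expr1n. Qed.
Lemma QfM a b : Qf a -> Qf b -> Qf (a * b).
Proof. by rewrite /Qf exprMn => /eqP-> /eqP->. Qed.
Lemma QfV a : Qf a -> Qf a^-1.
Proof. by rewrite /Qf exprVn => /eqP->. Qed.
Lemma QfN a : Qf a -> Qf (- a).
Proof. by move=> ha; rewrite /Qf -(expn1 q) frobN expn1 (eqP ha). Qed.
Lemma QfD a b : Qf a -> Qf b -> Qf (a + b).
Proof. by move=> ha hb; rewrite /Qf -(expn1 q) frobD expn1 (eqP ha) (eqP hb). Qed.


Lemma roots_le (pp : {poly F}) (S : {set F}) :
  pp != 0 -> (forall x, x \in S -> pp.[x] = 0) -> (#|S| < size pp)%N.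
Proof.
move=> hp0 hS; rewrite cardE; apply: max_poly_roots => //; last exact: enum_uniq.
by apply/allP => x; rewrite mem_enum => /hS hx; rewrite /root hx.
Qed.

Definition TP : {poly F} := \sum_(i < h) 'X^(q ^ i).

Lemma TPE x : TP.[x] = Tr x.
Proof. by rewrite /TP horner_sum; apply: eq_bigr => i _; rewrite hornerXn. Qed.

Lemma size_TPn n : size (\sum_(i < n.+1) 'X^(q ^ i) : {poly F}) = (q ^ n).+1.
Proof.
elim: n => [|n IH]; first by rewrite big_ord1 expn0 size_polyXn.
rewrite big_ord_recr /= addrC size_polyDl size_polyXn // IH ltnS.
by rewrite ltn_exp2l // q_gt1.
Qed.

Lemma size_TP : size TP = (q ^ h.-1).+1.
Proof. by rewrite /TP -(prednK (ltnW hh)) size_TPn. Qed.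

Definition kerS : {set F} := [set x | Tr x == 0].
Definition QS : {set F} := [set t | Qf t].

Lemma card_ker : (#|kerS| <= q ^ h.-1)%N.
Proof.
rewrite -ltnS -size_TP; apply: roots_le.
  by rewrite -size_poly_eq0 size_TP.
by move=> x; rewrite inE TPE => /eqP.
Qed.

Lemma card_QS_le : (#|QS| <= q)%N.
Proof.
rewrite -ltnS.
have hs : size ('X^q - 'X : {poly F}) = q.+1.
  by rewrite size_polyDl size_polyXn // size_polyN size_polyX ltnS q_gt1.
rewrite -hs; apply: roots_le; first by rewrite -size_poly_eq0 hs.
by move=> x; rewrite inE /Qf !hornerE => /eqP->; rewrite subrr.
Qed.

Lemma exists_Tr_ne0 : exists x, Tr x != 0.
Proof.
apply/existsP; apply: contraT; rewrite negb_exists => /forallP H.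
have : (#|kerS| <= q ^ h.-1)%N := card_ker.
have -> : kerS = setT by apply/setP => x; rewrite !inE; move: (H x); rewrite negbK.
rewrite cardsT hF -(prednK (ltnW hh)) expnS leqNgt -{1}(mul1n (q ^ _)%N).
by rewrite ltn_pmul2r ?expn_gt0 ?(ltnW q_gt1) // q_gt1.
Qed.

Lemma exists_Tr1 : exists u0, Tr u0 = 1.
Proof.
have [x hx] := exists_Tr_ne0; exists ((Tr x)^-1 * x).
by rewrite TrZ ?mulVf // QfV // TrQ.
Qed.

Lemma card_F_le : (q ^ h <= #|QS| * #|kerS|)%N.
Proof.
have [u0 hu0] := exists_Tr1.
rewrite -cardsX -hF -cardsT.
apply: (@inj_le _ _ (fun x => (Tr x, x - Tr x * u0))).
  move=> x y _ _ [e1 e2]; move: e2; rewrite e1 => /eqP; rewrite subr_eq.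
  by rewrite subrK => /eqP.
move=> x _; rewrite !inE /= TrQ /= TrB TrZ ?TrQ // hu0 mulr1 subrr eqxx //.
Qed.

Lemma qh_split : (q ^ h = q * q ^ h.-1)%N.
Proof. by rewrite -expnS prednK // ltnW. Qed.

Lemma card_QS_ge : (q <= #|QS|)%N.
Proof.
have H := card_F_le.
have H2 : (#|QS| * #|kerS| <= #|QS| * q ^ h.-1)%N by rewrite leq_mul2l card_ker orbT.
have := leq_trans H H2.
by rewrite qh_split leq_pmul2r // expn_gt0 (ltnW q_gt1).
Qed.

Lemma card_ker_ge : (q ^ h.-1 <= #|kerS|)%N.
Proof.
have H := card_F_le.
have H2 : (#|QS| * #|kerS| <= q * #|kerS|)%N by rewrite leq_mul2r card_QS_le orbT.
have := leq_trans H H2.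
by rewrite qh_split leq_pmul2l // (ltnW q_gt1).
Qed.

Lemma exists_ker_nz : exists z, (z != 0) && (Tr z == 0).
Proof.
apply/existsP; apply: contraT; rewrite negb_exists => /forallP H.
have : (#|kerS| <= 1)%N.
  rewrite -(cards1 (0 : F)); apply: subset_leq_card; apply/subsetP => x.
  rewrite !inE; move: (H x); rewrite negb_and negbK; case: eqP => //= _ /negbTE->.
  by [].
have h1 : (1 < q ^ h.-1)%N.
  apply: leq_trans (q_gt1) _; rewrite -{1}(expn1 q) leq_exp2l ?q_gt1 //.
  by rewrite -ltnS prednK // ltnW.
by move=> h2; have := leq_trans (leq_trans h1 card_ker_ge) h2.
Qed.


Lemma exists_v (b : F) : ~~ Qf b -> exists v, (Tr v == 0) && (Tr (b * v) == 1).
Proof.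
move=> hb; apply/existsP; apply: contraT; rewrite negb_exists => /forallP H.
have H0 : forall v, Tr v = 0 -> Tr (b * v) = 0.
  move=> v hv; apply/eqP; apply: contraT => hs.
  move: (H ((Tr (b * v))^-1 * v)); rewrite (TrZ _ (QfV (TrQ _))) hv mulr0 eqxx /=.
  by rewrite mulrCA (TrZ _ (QfV (TrQ _))) mulVf // eqxx.
have [u0 hu0] := exists_Tr1.
set beta := Tr (b * u0).
have H1 : forall u, Tr (b * u) = Tr u * beta.
  move=> u; have := H0 (u - Tr u * u0).
  rewrite TrB TrZ ?TrQ // hu0 mulr1 subrr => /(_ erefl).
  by rewrite mulrBr TrB (mulrCA b) (TrZ _ (TrQ u)) => /eqP; rewrite subr_eq0 => /eqP.
have hd : b - beta != 0.
  by apply: contra hb; rewrite subr_eq0 => /eqP->; rewrite /beta TrQ.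
have H2 : forall u, Tr ((b - beta) * u) = 0.
  move=> u; rewrite mulrBl TrB H1 (TrZ _ (TrQ _)) mulrC subrr //.
have [x hx] := exists_Tr_ne0.
by move: hx; rewrite -(mulVKf hd x) H2 eqxx.
Qed.

Lemma card_U_le (b alpha : F) : ~~ Qf b ->
  (#|[set u | (Tr u == 1%R) && (Tr (b * u)%R == alpha)]| <= q ^ h.-2)%N.
Proof.
move=> hb; set U := [set u | _].
have [v /andP [/eqP hv0 /eqP hv1]] := exists_v hb.
case: (set_0Vmem U) => [->|[u1 hu1]]; first by rewrite cards0.
move: hu1; rewrite inE => /andP [/eqP hu11 /eqP hu12].
set K := [set z | (Tr z == 0) && (Tr (b * z) == 0)].
have h1 : (#|U| <= #|K|)%N.
  apply: (@inj_le _ _ (fun u => u - u1)).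
    by move=> x y _ _ /eqP; rewrite (can2_eq (subrK u1) (addrK u1)) subrK => /eqP.
  move=> u; rewrite !inE => /andP [/eqP e1 /eqP e2].
  by rewrite TrB e1 hu11 subrr mulrBr TrB e2 hu12 subrr !eqxx.
have h2 : (#|K| * #|QS| <= #|kerS|)%N.
  rewrite -cardsX; apply: (@inj_le _ _ (fun zt => zt.1 + zt.2 * v)).
    move=> [z1 t1] [z2 t2]; rewrite !inE /= => /andP [hz1 ht1] /andP [hz2 ht2] e.
    have et : t1 = t2.
      move: (congr1 (fun w => Tr (b * w)) e) => /=.
      rewrite !mulrDr !TrD.
      move: hz1 hz2 => /andP [_ /eqP ->] /andP [_ /eqP ->].
      by rewrite !add0r (mulrCA b t1) (TrZ _ ht1) (mulrCA b t2) (TrZ _ ht2) hv1 !mulr1.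
    by move: e; rewrite et => /addIr ->.
  move=> [z t]; rewrite !inE /= TrD => /andP [/andP [/eqP -> _] ht].
  by rewrite (TrZ _ ht) hv0 mulr0 addr0.
have h3 : (#|K| * q <= q ^ h.-2 * q)%N.
  apply: (@leq_trans (#|K| * #|QS|)); first by rewrite leq_mul2l card_QS_ge orbT.
  apply: leq_trans h2 _; apply: leq_trans card_ker _.
  have e : h.-1 = (h.-2).+1 by case: (h) hh => [|[|h']].
  by rewrite -expnSr -e.
rewrite leq_pmul2r in h3; last by apply: ltnW; apply: q_gt1.
exact: leq_trans h1 h3.
Qed.


Definition e0 : 'I_3 := @Ordinal 3 0 isT.
Definition e1 : 'I_3 := @Ordinal 3 1 isT.
Definition e2 : 'I_3 := @Ordinal 3 2 isT.

Lemma ord3P (j : 'I_3) : [\/ j = e0, j = e1 | j = e2].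
Proof.
case: j => [[|[|[|m]]] hm].
- by constructor 1; apply: val_inj.
- by constructor 2; apply: val_inj.
- by constructor 3; apply: val_inj.
- by [].
Qed.

Lemma row3_0 (a b c : F) : row3 a b c 0 e0 = a. Proof. by rewrite mxE. Qed.
Lemma row3_1 (a b c : F) : row3 a b c 0 e1 = b. Proof. by rewrite mxE. Qed.
Lemma row3_2 (a b c : F) : row3 a b c 0 e2 = c. Proof. by rewrite mxE. Qed.

Lemma row3E (v : 'rV[F]_3) : v = row3 (v 0 e0) (v 0 e1) (v 0 e2).
Proof.
apply/rowP => j; rewrite mxE.
by case: (ord3P j) => ->.
Qed.

Lemma row3Z (c a0 a1 a2 : F) : c *: row3 a0 a1 a2 = row3 (c * a0) (c * a1) (c * a2).
Proof. by apply/rowP => j; rewrite !mxE; case: (ord3P j) => ->. Qed.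

Lemma row3_inj (a0 a1 a2 b0 b1 b2 : F) :
  row3 a0 a1 a2 = row3 b0 b1 b2 -> [/\ a0 = b0, a1 = b1 & a2 = b2].
Proof.
move=> e; split.
- by move: (congr1 (fun v : 'rV[F]_3 => v 0 e0) e); rewrite !row3_0.
- by move: (congr1 (fun v : 'rV[F]_3 => v 0 e1) e); rewrite !row3_1.
- by move: (congr1 (fun v : 'rV[F]_3 => v 0 e2) e); rewrite !row3_2.
Qed.

Lemma row3_eq0 (a0 a1 a2 : F) : (row3 a0 a1 a2 == 0) = [&& a0 == 0, a1 == 0 & a2 == 0].
Proof.
apply/eqP/idP.
  by move=> e; have := e; rewrite (row3E 0) !mxE => /row3_inj [-> -> ->]; rewrite !eqxx.
move=> /and3P [/eqP -> /eqP -> /eqP ->]; apply/rowP => j; rewrite !mxE.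
by case: (ord3P j) => ->.
Qed.

Definition dot (u l : 'rV[F]_3) : F := \sum_(i < 3) u 0 i * l 0 i.

Lemma dot_row3 (a0 a1 a2 b0 b1 b2 : F) :
  dot (row3 a0 a1 a2) (row3 b0 b1 b2) = a0 * b0 + a1 * b1 + a2 * b2.
Proof. by rewrite /dot !big_ord_recr big_ord0 /= !mxE /= add0r. Qed.

Lemma dotE (u l : 'rV[F]_3) : dot u l = (u *m l^T) 0 0.
Proof. by rewrite /dot mxE; apply: eq_bigr => i _; rewrite mxE. Qed.

Lemma dotM (u l : 'rV[F]_3) (M : 'M[F]_3) : dot u (l *m M^T) = dot (u *m M) l.
Proof. by rewrite !dotE trmx_mul trmxK mulmxA. Qed.

Lemma dotZl c (u l : 'rV[F]_3) : dot (c *: u) l = c * dot u l.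
Proof. by rewrite /dot mulr_sumr; apply: eq_bigr => i _; rewrite mxE mulrA. Qed.

Lemma dotZr c (u l : 'rV[F]_3) : dot u (c *: l) = c * dot u l.
Proof. by rewrite /dot mulr_sumr; apply: eq_bigr => i _; rewrite mxE mulrCA. Qed.

Lemma normalizedP (v : 'rV[F]_3) : normalized v =
  [|| v 0 e0 == 1, (v 0 e0 == 0) && (v 0 e1 == 1)
    | [&& v 0 e0 == 0, v 0 e1 == 0 & v 0 e2 == 1]].
Proof.
apply/existsP/idP.
  move=> [i /andP [hi /forallP hj]].
  case: (ord3P i) hi hj => -> hi hj; rewrite hi ?orbT //=.
    by move: (hj e0); rewrite /= => /eqP ->; rewrite eqxx orbT.
  move: (hj e0) (hj e1); rewrite /= => /eqP -> /eqP ->.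
  by rewrite !eqxx !orbT.
case/or3P.
- by move=> h0; exists e0; rewrite h0 /=; apply/forallP => -[[|[|[|m]]] hm].
- move=> /andP [h0 h1]; exists e1; rewrite h1 /=; apply/forallP => -[[|[|[|m]]] hm] //=.
  by rewrite (_ : Ordinal hm = e0) //; apply: val_inj.
- move=> /and3P [h0 h1 h2]; exists e2; rewrite h2 /=; apply/forallP => -[[|[|[|m]]] hm] //=.
  by rewrite (_ : Ordinal hm = e0) //; apply: val_inj.
  by rewrite (_ : Ordinal hm = e1) //; apply: val_inj.
Qed.

Lemma normalized_neq0 (v : 'rV[F]_3) : normalized v -> v != 0.
Proof.
rewrite normalizedP (row3E v) row3_eq0 !row3_0 !row3_1 !row3_2.
case/or3P => [/eqP ->|/andP [_ /eqP ->]|/and3P [_ _ /eqP ->]];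
  by rewrite oner_eq0 ?andbF.
Qed.

Lemma norm_uniq (u w : 'rV[F]_3) c :
  normalized u -> normalized w -> u = c *: w -> u = w.
Proof.
move=> hu hw e.
suff c1 : c = 1 by rewrite e c1 scale1r.
have cn : c != 0.
  by apply: contraNneq (normalized_neq0 hu) => c0; rewrite e c0 scale0r.
move: hu hw; rewrite e !normalizedP !mxE => hu.
case/or3P => [/eqP K|/andP [/eqP K0 /eqP K]|/and3P [/eqP K0 /eqP K1 /eqP K]];
  move: hu; rewrite ?K ?K0 ?K1 ?mulr1 ?mulr0 ?eqxx ?(negbTE cn) /= ?andbF ?orbF.
  all: by rewrite ?(eq_sym 0 1) ?oner_eq0 /= => /eqP.
Qed.

Definition nrm (v : 'rV[F]_3) : 'rV[F]_3 :=
  if v 0 e0 != 0 then (v 0 e0)^-1 *: v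
  else if v 0 e1 != 0 then (v 0 e1)^-1 *: v else (v 0 e2)^-1 *: v.

Lemma nrm_spec (v : 'rV[F]_3) : v != 0 ->
  normalized (nrm v) /\ exists2 c, c != 0 & nrm v = c *: v.
Proof.
move=> hv; rewrite /nrm.
case: ifP => h0.
  split; last by exists (v 0 e0)^-1; rewrite ?invr_eq0.
  by rewrite normalizedP !mxE mulVf // eqxx.
case: ifP => h1.
  split; last by exists (v 0 e1)^-1; rewrite ?invr_eq0.
  move/negbFE: h0 => /eqP h0.
  by rewrite normalizedP !mxE h0 mulr0 mulVf // !eqxx orbT.
move/negbFE: h0 => /eqP h0; move/negbFE: h1 => /eqP h1.
have h2 : v 0 e2 != 0.
  by move: hv; rewrite {1}(row3E v) row3_eq0 h0 h1 eqxx.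
split; last by exists (v 0 e2)^-1; rewrite ?invr_eq0.
by rewrite normalizedP !mxE h0 h1 !mulr0 mulVf // !eqxx !orbT.
Qed.


Lemma inL0P (w : 'rV[F]_3) : inL0 q h w -> exists x y c,
  [/\ Qf y, (x != 0) || (y != 0), c != 0 & w = c *: row3 x (Tr x) y].
Proof.
case/existsP => x /existsP [y /and3P [hy hxy /existsP [c /andP [hc /eqP e]]]].
by exists x, y, c.
Qed.

Lemma inL0I x y c : Qf y -> (x != 0) || (y != 0) -> c != 0 ->
  inL0 q h (c *: row3 x (Tr x) y).
Proof.
move=> hy hxy hc; apply/existsP; exists x; apply/existsP; exists y.
apply/and3P; split => //; apply/existsP; exists c; by rewrite hc eqxx.
Qed.

Lemma inL0Z c (w : 'rV[F]_3) : c != 0 -> inL0 q h w -> inL0 q h (c *: w).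
Proof.
move=> hc /inL0P [x [y [c' [hy hxy hc' ->]]]].
by rewrite scalerA; apply: inL0I => //; rewrite mulf_neq0.
Qed.

Lemma inL0_neq0 (w : 'rV[F]_3) : inL0 q h w -> w != 0.
Proof.
move=> /inL0P [x [y [c [hy hxy hc ->]]]].
rewrite row3Z row3_eq0 !mulf_eq0 (negbTE hc) /=.
by case/orP: hxy => /negbTE -> //; rewrite !andbF.
Qed.

Definition stdTan (l w0 : 'rV[F]_3) : Prop :=
  [/\ inL0 q h w0, dot w0 l = 0 &
      forall w, inL0 q h w -> dot w l = 0 -> exists c, w = c *: w0].

Lemma SL1 x0 : stdTan (row3 1 0 (- x0)) (row3 x0 (Tr x0) 1).
Proof.
split.
- by rewrite -(scale1r (row3 x0 _ _)); apply: inL0I; rewrite ?Qf1 ?oner_eq0 ?orbT.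
- by rewrite dot_row3; ring.
move=> w /inL0P [x [y [c [hy hxy hc ->]]]].
rewrite dotZl dot_row3 => /eqP; rewrite mulf_eq0 (negbTE hc) /= => /eqP e.
have ex : x = y * x0 by apply/eqP; rewrite -subr_eq0 -e; apply/eqP; ring.
have hy0 : y != 0.
  by apply: contraTneq hxy => y0; move: ex; rewrite y0 mul0r => ->; rewrite eqxx.
exists (c * y); rewrite ex (TrZ _ hy) !row3Z; congr row3; ring.
Qed.

Lemma SL2 m kk : (forall x, Tr x = m * x -> x = 0) ->
  exists w0, stdTan (row3 m (-1) kk) w0.
Proof.
move=> hinj.
have phi_inj : injective (fun x => Tr x - m * x).
  move=> x1 x2 /= e; apply/eqP; rewrite -subr_eq0; apply/eqP; apply: hinj.
  rewrite TrB; apply/eqP; rewrite -subr_eq0; apply/eqP.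
  by move/eqP: e; rewrite -subr_eq0 => /eqP <-; ring.
have [x0 hx0] : exists x0, Tr x0 - m * x0 = kk.
  have := inj_card_onto phi_inj (leqnn _) kk.
  by case/codomP => x0 ->; exists x0.
exists (row3 x0 (Tr x0) 1); split.
- by rewrite -(scale1r (row3 x0 _ _)); apply: inL0I; rewrite ?Qf1 ?oner_eq0 ?orbT.
- by rewrite dot_row3 -hx0; ring.
move=> w /inL0P [x [y [c [hy hxy hc ->]]]].
rewrite dotZl dot_row3 => /eqP; rewrite mulf_eq0 (negbTE hc) /= => /eqP e.
have hy0 : y != 0.
  apply: contraTneq hxy => y0; rewrite y0 eqxx orbF negbK; apply/eqP; apply: hinj.
  by apply/eqP; rewrite -subr_eq0 -oppr_eq0 -e y0; apply/eqP; ring.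
have ex : y^-1 * x = x0.
  apply: phi_inj => /=; rewrite (TrZ _ (QfV hy)) hx0.
  have -> : Tr x = m * x + kk * y by rewrite -[Tr x]addr0 -e; ring.
  by field.
by exists (c * y); rewrite -ex (TrZ _ (QfV hy)) !row3Z; congr row3; field.
Qed.


Lemma SL3 b : ~~ Qf b -> stdTan (row3 0 (-1) b) (row3 1 0 0).
Proof.
move=> hb; split.
- have [z /andP [hz /eqP hTz]] := exists_ker_nz.
  have -> : row3 1 0 0 = z^-1 *: row3 z (Tr z) 0.
    by rewrite row3Z hTz mulr0 mulVf.
  by apply: inL0I; rewrite ?Qf0 ?hz ?invr_eq0.
- by rewrite dot_row3; ring.
move=> w /inL0P [x [y [c [hy hxy hc ->]]]].
rewrite dotZl dot_row3 => /eqP; rewrite mulf_eq0 (negbTE hc) /= => /eqP e.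
have eT : Tr x = b * y by rewrite -[Tr x]addr0 -e; ring.
have y0 : y = 0.
  apply/eqP; apply: contraNT hb => hy0.
  have -> : b = Tr x * y^-1 by rewrite eT; field.
  by apply: QfM; rewrite ?TrQ ?QfV.
exists (c * x); rewrite eT y0 mulr0 !row3Z; congr row3; ring.
Qed.

Lemma SL4 a b m : m != 0 -> Tr m^-1 = 1 -> Tr (b * m^-1) != Tr a ->
  stdTan (row3 m (-1) (b - m * a)) (row3 m^-1 1 0).
Proof.
move=> hm h1 h2; split.
- have -> : row3 m^-1 1 0 = 1 *: row3 m^-1 (Tr m^-1) 0 by rewrite scale1r h1.
  by apply: inL0I; rewrite ?Qf0 ?invr_eq0 ?hm ?oner_eq0.
- by rewrite dot_row3; field.
move=> w /inL0P [x [y [c [hy hxy hc ->]]]].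
rewrite dotZl dot_row3 => /eqP; rewrite mulf_eq0 (negbTE hc) /= => /eqP e.
have y0 : y = 0.
  apply/eqP; apply: contraNT h2 => hy0.
  set x' := y^-1 * x; set t := Tr x'.
  have et : t = m * x' + (b - m * a).
    rewrite /t /x' (TrZ _ (QfV hy)).
    have -> : Tr x = m * x + (b - m * a) * y by rewrite -[Tr x]addr0 -e; ring.
    by field.
  have ex' : x' = t * m^-1 - b * m^-1 + a by rewrite et; field.
  have := congr1 Tr ex'.
  rewrite !TrD TrN (TrZ _ (TrQ x')) h1 mulr1 -/t => /eqP.
  move=> /eqP E; apply/eqP.
  have -> : Tr (b / m) = Tr a + (t - (t - Tr (b / m) + Tr a)) by ring.
  by rewrite -E subrr addr0.
have eT : Tr x = m * x by rewrite -[Tr x]addr0 -e y0; ring.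
by exists (c * m * x); rewrite eT y0 !row3Z; congr row3; field.
Qed.


Lemma incE (u l : 'rV[F]_3) : incident u l = (dot u l == 0).
Proof. by []. Qed.

Definition Tset (M : 'M[F]_3) (P : 'rV[F]_3) : {set 'rV[F]_3} :=
  [set l : 'rV[F]_3 | [&& normalized l, incident P l &
        tangent (fun v : 'rV[F]_3 => inL0 q h (v *m M)) l]].

Lemma lM_neq0 (M : 'M[F]_3) (l : 'rV[F]_3) : M \in unitmx -> l != 0 -> l *m M^T != 0.
Proof.
move=> hM; apply: contraNneq => e.
have hMT : M^T \in unitmx by rewrite unitmx_tr.
by rewrite -(mulmxK hMT l) e mul0mx.
Qed.

Lemma transfer (M : 'M[F]_3) (P l w0 : 'rV[F]_3) : M \in unitmx -> l != 0 ->
  dot (P *m M) l = 0 -> stdTan l w0 -> nrm (l *m M^T) \in Tset M P.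
Proof.
move=> hM hl hPl [H1 H2 H3].
have [hn [c hc el]] := nrm_spec (lM_neq0 hM hl).
rewrite inE hn /= incE el dotZr dotM hPl mulr0 eqxx /=.
have hw0M : w0 *m invmx M != 0.
  apply: contraNneq (inL0_neq0 H1) => e.
  by rewrite -(mulmxKV hM w0) e mul0mx.
have [hu0n [d hd eu0]] := nrm_spec hw0M.
set u0 := nrm (w0 *m invmx M) in hu0n eu0 *.
have eu0M : u0 *m M = d *: w0 by rewrite eu0 -scalemxAl mulmxKV.
rewrite /tangent; apply/cards1P; exists u0.
apply/setP => u; rewrite !inE; apply/idP/eqP.
- case/and3P => hun huL hui.
  have hd0 : dot (u *m M) l = 0.
    by move: hui; rewrite incE dotZr dotM mulf_eq0 (negbTE hc) /= => /eqP.
  have [e ee] := H3 _ huL hd0.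
  have eu : u = (e * d^-1) *: u0.
    by rewrite -(mulmxK hM u) ee eu0 scalerA -mulrA mulVf // mulr1 scalemxAl.
  exact: norm_uniq hun hu0n eu.
- move=> ->; rewrite hu0n eu0M (inL0Z hd H1) /=.
  by rewrite incE dotZr dotM eu0M dotZl H2 !mulr0.
Qed.

Lemma transfer_inj (M : 'M[F]_3) (l1 l2 : 'rV[F]_3) : M \in unitmx -> l1 != 0 -> l2 != 0 ->
  nrm (l1 *m M^T) = nrm (l2 *m M^T) -> exists c, l1 = c *: l2.
Proof.
move=> hM h1 h2 e.
have [_ [c1 hc1 e1]] := nrm_spec (lM_neq0 hM h1).
have [_ [c2 hc2 e2]] := nrm_spec (lM_neq0 hM h2).
have hMT : M^T \in unitmx by rewrite unitmx_tr.
exists (c1^-1 * c2).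
rewrite -(mulmxK hMT l1) -(mulmxK hMT l2) scalemxAl.
congr (_ *m _).
rewrite -scalerA -e2 -e e1 scalerA mulVf // scale1r //.
Qed.

Lemma count_lines (I : finType) (D : {set I}) (g : I -> 'rV[F]_3)
  (M : 'M[F]_3) (P : 'rV[F]_3) : M \in unitmx ->
  (forall o, o \in D -> [/\ g o != 0, dot (P *m M) (g o) = 0 & exists w0, stdTan (g o) w0]) ->
  (forall o1 o2 c, o1 \in D -> o2 \in D -> g o1 = c *: g o2 -> o1 = o2) ->
  (#|D| <= #|Tset M P|)%N.
Proof.
move=> hM Hg Hinj.
apply: (@inj_le _ _ (fun o => nrm (g o *m M^T))).
  move=> o1 o2 h1 h2 e.
  have [n1 _ _] := Hg o1 h1; have [n2 _ _] := Hg o2 h2.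
  have [c ec] := transfer_inj hM n1 n2 e.
  exact: Hinj ec.
move=> o ho; have [n hd [w0 hw0]] := Hg o ho.
exact: (transfer hM n hd hw0).
Qed.


Lemma qh2_gt0 : (0 < q ^ h.-2)%N.
Proof. by rewrite expn_gt0 (ltnW q_gt1). Qed.

Lemma qh2_le : (q ^ h.-2 <= q ^ h)%N.
Proof. by rewrite leq_exp2l ?q_gt1 // -subn2 leq_subr. Qed.

Lemma main (M : 'M[F]_3) (hM : M \in unitmx) (P : 'rV[F]_3)
  (hP : normalized P) (hPL : ~~ inL0 q h (P *m M)) :
  (q ^ h - q ^ h.-2 + 1 <= #|Tset M P|)%N.
Proof.
have H1 := qh2_gt0; have H2 := qh2_le.
set P' := P *m M in hPL *.
have eP : P' = row3 (P' 0 e0) (P' 0 e1) (P' 0 e2) := row3E P'.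
move: eP hPL; set a0 := P' 0 e0; set a1 := P' 0 e1; set a2 := P' 0 e2 => eP hPL.
have cF : #|[set: F]| = (q ^ h)%N by rewrite cardsT hF.
case: (eqVneq a2 0) => ha2.
  case: (eqVneq a0 0) => ha0.
    have hc : (#|[set: F]| <= #|Tset M P|)%N.
      apply: (@count_lines _ [set: F] (fun x0 => row3 1 0 (- x0)) M P hM); last first.
      move=> o1 o2 c _ _; rewrite row3Z => /row3_inj [e1 _ e3].
      have c1 : c = 1 by rewrite -[c]mulr1 -e1.
      by move: e3; rewrite c1 mul1r => /oppr_inj.
    move=> x0 _; split.
    - by rewrite row3_eq0 oner_eq0.
    - by rewrite -/P' eP dot_row3 ha0 ha2; ring.
    - by exists (row3 x0 (Tr x0) 1); apply: SL1.
    rewrite cF in hc; apply: leq_trans hc; lia.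
  set m := a1 / a0.
  have hinj : forall x, Tr x = m * x -> x = 0.
    move=> x ex; apply/eqP; apply: contraNT hPL => hx.
    have -> : P' = (a0 / x) *: row3 x (Tr x) 0.
      by rewrite eP ex row3Z ha2 mulr0 /m; congr row3; fld.
    by apply: inL0I; rewrite ?Qf0 ?hx ?mulf_neq0 ?invr_eq0.
  have hc : (#|[set: F]| <= #|Tset M P|)%N.
    apply: (@count_lines _ [set: F] (fun kk => row3 m (-1) kk) M P hM); last first.
    move=> o1 o2 c _ _; rewrite row3Z => /row3_inj [_ e2 e3].
    have c1 : c = 1 by apply: oppr_inj; rewrite e2; ring.
    by move: e3; rewrite c1 mul1r.
  move=> kk _; split.
  - by rewrite row3_eq0 oppr_eq0 oner_eq0 andbF.
  - by rewrite -/P' eP dot_row3 ha2 /m; fld.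
  - exact: SL2.
  rewrite cF in hc; apply: leq_trans hc; lia.
set a := a0 / a2; set b := a1 / a2.
have eP2 : P' = a2 *: row3 a b 1 by rewrite eP row3Z /a /b; congr row3; fld.
have hb : b != Tr a.
  apply: contraNneq hPL => eb; rewrite eP2 eb.
  by apply: inL0I; rewrite ?Qf1 ?oner_eq0 ?orbT.
set Bad := [set m | ((m == 0) && Qf b) || [&& m != 0, Tr m^-1 == 1 & Tr (b * m^-1) == Tr a]].
set D := [set o : option F | if o is Some m then m \notin Bad else true].
set g := fun o : option F => match o with
           | None => row3 1 0 (- a) | Some m => row3 m (-1) (b - m * a) end.
have hD : (#|D| <= #|Tset M P|)%N.
  apply: (@count_lines _ D g M P hM).
    move=> [m|] ; rewrite inE /g => hm; split.
    - by rewrite row3_eq0 oppr_eq0 oner_eq0 andbF.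
    - by rewrite -/P' eP2 dotZl dot_row3; rewrite /a /b; fld.
    - move: hm; rewrite inE negb_or => /andP [hm1 hm2].
      case: (eqVneq m 0) => hm0.
        move: hm1; rewrite hm0 eqxx /= => hQ.
        by exists (row3 1 0 0); rewrite mul0r subr0; apply: SL3.
      case: (eqVneq (Tr m^-1) 1) => hT.
        exists (row3 m^-1 1 0); apply: SL4 => //.
        by move: hm2; rewrite hm0 hT eqxx.
      apply: SL2 => x ex; apply/eqP; apply: contraNT hT => hx.
      have ht : Tr x != 0 by rewrite ex mulf_neq0.
      have ex' : x = Tr x * m^-1 by rewrite ex; fld.
      have e' : Tr x = Tr x * Tr m^-1 by rewrite -(TrZ _ (TrQ x)) -ex'.
      by apply/eqP; apply: (mulfI ht); rewrite mulr1 -e'.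
    - by rewrite row3_eq0 oner_eq0.
    - by rewrite -/P' eP2 dotZl dot_row3; rewrite /a /b; fld.
    - by exists (row3 a (Tr a) 1); apply: SL1.
  move=> [m1|] [m2|] c _ _; rewrite /g row3Z => /row3_inj [e1 e2 e3] //.
  - have c1 : c = 1 by apply: oppr_inj; rewrite e2; ring.
    by rewrite e1 c1 mul1r.
  - by move: e2; rewrite mulr0 => /eqP; rewrite oppr_eq0 oner_eq0.
  - have c0 : c = 0 by apply: oppr_inj; rewrite oppr0 e2; ring.
    by move: e1; rewrite c0 mul0r => /eqP; rewrite oner_eq0.
have hBad : (#|Bad| <= q ^ h.-2)%N.
  case: (boolP (Qf b)) => hQb.
    apply: leq_trans H1; rewrite -(cards1 (0 : F)); apply: subset_leq_card.
    apply/subsetP => m; rewrite !inE hQb andbT => /orP [//|/and3P [hm0 /eqP hT /eqP hTb]].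
    by move: hb; rewrite -hTb (TrZ _ hQb) hT mulr1 eqxx.
  apply: leq_trans (card_U_le (Tr a) hQb).
  apply: (@inj_le _ _ (fun m => m^-1)); first by move=> x y _ _; apply: invr_inj.
  move=> m; rewrite !inE (negbTE hQb) andbF /= => /and3P [_ -> ->] //.
have hDc : (#|~: D| <= #|Bad|)%N.
  apply: (@inj_le _ _ (fun o : option F => if o is Some m then m else 0)).
    by move=> [x|] [y|] //; rewrite !inE //= => _ _ ->.
  by move=> [x|]; rewrite !inE //= negbK.
have := cardsC D; rewrite card_option hF => eD.
apply: leq_trans hD.
lia.
Qed.

End FieldFacts.

Unset Implicit Arguments.

Theorem lemma2p10 (F : finFieldType) (q h : nat)
  (hq : prime_power q) (hh : (2 <= h)%N) (hF : #|F| = (q ^ h)%N)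
  (M : 'M[F]_3) (hM : M \in unitmx)
  (hblock : blocking_set (fun v : 'rV[F]_3 => inL0 q h (v *m M)))
  (P : 'rV[F]_3) (hP : normalized P) (hPL : ~~ inL0 q h (P *m M)) :
  (q ^ h - q ^ (h - 2) + 1 <=
   #|[set l : 'rV[F]_3 | [&& normalized l, incident P l &
        tangent (fun v : 'rV[F]_3 => inL0 q h (v *m M)) l]]|)%N.
Proof.
case: hq => p [k [hp hk hqpk]].
rewrite subn2.
exact: (main hp hk hqpk hh hF hM hP hPL).
Qed.
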